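(* Let $D$ be a tournament missing disjoint paths of length 2 and let $C=a_1b_1c_1,\dots,a_kb_kc_k$ be a double cycle in $\Delta(D)$. Then for all $i\in\{1,\dots,k\}$, with $H=D[K(C)]$: (1) $N^+_H(a_i)\setminus\{c_i\}=N^+_H(c_i)\setminus\{a_i\}$; (2) $N^-_H(a_i)\setminus\{c_i\}=N^-_H(c_i)\setminus\{a_i\}$.
   Context: All digraphs are finite oriented graphs; $D[X]$ is the induced subdigraph. $N^+_H(v)$, $N^-_H(v)$ are out/in-neighborhoods in $H$; $N^{++}(v)$ (in $D$) is the set of vertices $w\notin N^+(v)\cup\{v\}$ with $u\to w$ for some $u\in N^+(v)$. A missing edge is a pair of distinct non-adjacent vertices; the missing graph is formed by the missing edges. $D$ is a tournament missing disjoint paths of length 2 if its missing graph is a vertex-disjoint union of paths each with exactly two edges. For missing edges $\{x,y\},\{a,b\}$, $\{x,y\}$ loses to $\{a,b\}$ (written $xy\to ab$) if the endpoints can be labelled so that $x\to a$, $b\notin N^+(x)\cup N^{++}(x)$, $y\to b$, $a\notin N^+(y)\cup N^{++}(y)$. $\Delta(D)$ has the missing edges as vertices and arcs $(e,e')$ whenever $e$ loses to $e'$. For missing paths $abc$, $xyz$, $abc\to xyz$ means each of $ab,bc$ loses to each of $xy,yz$. A double cycle is a sequence $C=a_1b_1c_1,\dots,a_kb_kc_k$ ($k\ge2$) of distinct missing paths of length 2 (components of the missing graph, edges $a_ib_i,b_ic_i$) with $a_ib_ic_i\to a_{i+1}b_{i+1}c_{i+1}$ for all $i$, indices modulo $k$.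 $K(C)=\{a_i,b_i,c_i:1\le i\le k\}$. *)

(* Defs.v *)
From mathcomp Require Import all_boot.
Set Implicit Arguments. Unset Strict Implicit. Unset Printing Implicit Defensive.

Section Digraphs.
Variables (V : finType) (arc : rel V).

Definition oriented : Prop :=
  (forall x, ~~ arc x x) /\ (forall x y, arc x y -> ~~ arc y x).

Definition outN (v : V) : {set V} := [set w | arc v w].
Definition inN (v : V) : {set V} := [set w | arc w v].
Definition outN2 (v : V) : {set V} :=
  [set w | (w \notin outN v) && (w != v) && [exists u, arc v u && arc u w]].

Definition missing (x y : V) : bool := (x != y) && ~~ arc x y && ~~ arc y x.

Definition missN (v : V) : {set V} := [set w | missing v w].

Definition missing_path (a b c : V) : Prop :=
  [/\ a != c, missN b = [set a; c], missN a = [set b] & missN c = [set b]].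

(* D is a tournament missing disjoint paths of length 2: every component of
   the missing graph is a path with exactly two edges *)
Definition tourn_missing_P2 : Prop :=
  oriented /\
  forall x y, missing x y -> exists a b c, missing_path a b c /\
     ((x == a) && (y == b) || (x == b) && (y == a) ||
      (x == b) && (y == c) || (x == c) && (y == b)).

Definition loses_lab (x y a b : V) : bool :=
  [&& arc x a, b \notin outN x :|: outN2 x, arc y b & a \notin outN y :|: outN2 y].

Definition loses (x y a b : V) : bool :=
  [&& missing x y, missing a b &
  [|| loses_lab x y a b, loses_lab y x a b, loses_lab x y b a | loses_lab y x b a]].

Definition path_loses (a b c x y z : V) : bool :=
  [&& loses a b x y, loses a b y z, loses b c x y & loses b c y z].

(* C = a_0 b_0 c_0, ..., a_{k-1} b_{k-1} c_{k-1} (indices mod k) is a double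
   cycle: k >= 2 distinct missing paths of length 2 (components of the
   missing graph), consecutive ones losing *)
Definition double_cycle (k : nat) (a b c : nat -> V) : Prop :=
  [/\ 2 <= k,
      forall i, i < k -> missing_path (a i) (b i) (c i),
      forall i j, i < k -> j < k -> [set a i; b i; c i] = [set a j; b j; c j] -> i = j
    & forall i, i < k -> path_loses (a i) (b i) (c i)
                                  (a (i.+1 %% k)) (b (i.+1 %% k)) (c (i.+1 %% k))].

Definition KC (k : nat) (a b c : nat -> V) : {set V} :=
  [set v | [exists i : 'I_k, (v == a i) || (v == b i) || (v == c i)]].

Definition outN_in (X : {set V}) (v : V) : {set V} := X :&: outN v.
Definition inN_in (X : {set V}) (v : V) : {set V} := X :&: inN v.

End Digraphs.

(* Main.v *)
Require Import Defs.
From mathcomp Require Import all_boot zify.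
Set Implicit Arguments. Unset Strict Implicit. Unset Printing Implicit Defensive.


Definition Dm (V : finType) (arc : rel V) (x y : V) : Prop :=
  forall u, arc x u -> arc u y -> False.

Lemma ori_contra (V : finType) (arc : rel V) x y :
  oriented arc -> arc x y -> arc y x -> False.
Proof. by case=> _ H /H /negP. Qed.

Lemma loses_lab_facts (V : finType) (arc : rel V) x y p q :
  oriented arc -> missing arc p q -> loses_lab arc x y p q ->
  arc x q || arc q x -> arc y p || arc p y ->
  (arc x p /\ arc y q /\ arc q x /\ arc p y /\ Dm arc x q /\ Dm arc y p).
Proof.
move=> Ho; rewrite /missing => /andP[/andP[npq nApq] nAqp].
case/and4P => hxp hq hyq hp.
move: hq hp; rewrite !in_setU !in_set !negb_or.
case/andP=> nxq h1; case/andP=> nyp h2.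
have qx : q != x by apply/eqP=> E; subst q; rewrite hxp in nAqp.
have py : p != y by apply/eqP=> E; subst p; rewrite hyq in nApq.
rewrite nxq qx /= in h1; rewrite nyp py /= in h2.
rewrite (negbTE nxq) (negbTE nyp) /= => Hyp Hxq.
do 5 (split=> //); move=> u H1 H2.
- by move/existsP: h1; apply; exists u; rewrite H1 H2.
- by move/existsP: h2; apply; exists u; rewrite H1 H2.
Qed.


Lemma missingC (V : finType) (arc : rel V) x y : missing arc x y = missing arc y x.
Proof. by rewrite /missing eq_sym andbAC. Qed.

Lemma loses_cases (V : finType) (arc : rel V) x y p q :
  oriented arc -> loses arc x y p q ->
  (forall u w, u \in [:: x; y] -> w \in [:: p; q] -> arc u w || arc w u) ->
  (arc x p /\ arc y q /\ arc q x /\ arc p y /\ Dm arc x q /\ Dm arc y p) \/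
  (arc x q /\ arc y p /\ arc p x /\ arc q y /\ Dm arc x p /\ Dm arc y q).
Proof.
move=> Ho /and3P[_ mpq H] Ha.
have mqp : missing arc q p by rewrite missingC.
have a1 := Ha x p; have a2 := Ha x q; have a3 := Ha y p; have a4 := Ha y q.
rewrite !inE !eqxx ?orbT in a1 a2 a3 a4.
case/or4P: H => H.
- by left; apply: loses_lab_facts Ho mpq H (a2 isT isT) (a3 isT isT).
- have [? [? [? [? [? ?]]]]] := loses_lab_facts Ho mpq H (a4 isT isT) (a1 isT isT).
  by right.
- have [? [? [? [? [? ?]]]]] := loses_lab_facts Ho mqp H (a1 isT isT) (a4 isT isT).
  by right.
- have [? [? [? [? [? ?]]]]] := loses_lab_facts Ho mqp H (a3 isT isT) (a2 isT isT).
  by left.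
Qed.


Ltac ori_tac Ho := match goal with
  H1 : is_true (?ar ?x ?y), H2 : is_true (?ar ?y ?x) |- _ =>
    exfalso; exact (ori_contra Ho H1 H2) end.

Lemma local_cases (V : finType) (arc : rel V) A B C A' B' C' :
  oriented arc -> path_loses arc A B C A' B' C' ->
  (forall u w, u \in [:: A; B; C] -> w \in [:: A'; B'; C'] -> arc u w || arc w u) ->
  ((arc A A' /\ arc A C' /\ arc C A' /\ arc C C' /\ arc B' A /\ arc B' C /\ arc B B'
    /\ arc A' B /\ arc C' B) /\
   (Dm arc A B' /\ Dm arc C B' /\ Dm arc B A' /\ Dm arc B C')) \/
  ((arc A' A /\ arc C' A /\ arc A' C /\ arc C' C /\ arc A B' /\ arc C B' /\ arc B A'
    /\ arc B C' /\ arc B' B) /\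
   (Dm arc A A' /\ Dm arc A C' /\ Dm arc C A' /\ Dm arc C C' /\ Dm arc B B')).
Proof.
move=> Ho /and4P[L1 L2 L3 L4] Ha.
have adj : forall x y p q, x \in [:: A; B; C] -> y \in [:: A; B; C] ->
   p \in [:: A'; B'; C'] -> q \in [:: A'; B'; C'] ->
   (forall u w, u \in [:: x; y] -> w \in [:: p; q] -> arc u w || arc w u).
  by move=> x y p q hx hy hp hq u w; rewrite !inE => /orP[]/eqP-> /orP[]/eqP->; apply: Ha.
have e := mem_head; have e2 : forall (z t : V) s, z \in [:: t, z & s] by move=> *; rewrite !inE eqxx ?orbT.
have e3 : forall (z t r : V), z \in [:: t; r; z] by move=> *; rewrite !inE eqxx ?orbT.
case: (loses_cases Ho L1 (adj _ _ _ _ (e _ _ _) (e2 _ _ _) (e _ _ _) (e2 _ _ _)));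
case: (loses_cases Ho L2 (adj _ _ _ _ (e _ _ _) (e2 _ _ _) (e2 _ _ _) (e3 _ _ _)));
case: (loses_cases Ho L3 (adj _ _ _ _ (e2 _ _ _) (e3 _ _ _) (e _ _ _) (e2 _ _ _)));
case: (loses_cases Ho L4 (adj _ _ _ _ (e2 _ _ _) (e3 _ _ _) (e2 _ _ _) (e3 _ _ _)));
move=> [? [? [? [? [? ?]]]]] [? [? [? [? [? ?]]]]] [? [? [? [? [? ?]]]]] [? [? [? [? [? ?]]]]];
  first [ori_tac Ho | left; repeat split; assumption | right; repeat split; assumption].
Qed.


Lemma ori_neg (V : finType) (arc : rel V) x y :
  oriented arc -> arc x y -> ~~ arc y x.
Proof. by case=> _ H /H. Qed.

Ltac evalarcs Ho := repeat match goal with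
 | H : is_true (?ar ?x ?y) |- context[?ar ?x ?y] => rewrite H
 | H : is_true (?ar ?x ?y) |- context[?ar ?y ?x] => rewrite (negbTE (ori_neg Ho H))
end.

Lemma local_typed (V : finType) (arc : rel V) A B C A' B' C' :
  oriented arc -> path_loses arc A B C A' B' C' ->
  (forall u w, u \in [:: A; B; C] -> w \in [:: A'; B'; C'] -> arc u w || arc w u) ->
  A != B -> C != B -> A' != B' -> C' != B' ->
  forall x y, x \in [:: A; B; C] -> y \in [:: A'; B'; C'] ->
  (arc y x = ((y == B') == ((x == B) (+) arc B' A))) /\ (arc y x -> Dm arc x y).
Proof.
move=> Ho L Ha nAB nCB nAB' nCB' x y.
rewrite !inE => /or3P[]/eqP-> /or3P[]/eqP->;
case: (local_cases Ho L Ha) =>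
  [[[? [? [? [? [? [? [? [? ?]]]]]]]] [? [? [? ?]]]]
  |[[? [? [? [? [? [? [? [? ?]]]]]]]] [? [? [? [? ?]]]]]];
rewrite ?eqxx ?(negbTE nAB) ?(negbTE nCB) ?(negbTE nAB') ?(negbTE nCB');
evalarcs Ho; (split; [by [] | move=> hf; first [assumption | ori_tac Ho | discriminate hf]]).
Qed.



Definition mcomp (V : finType) (arc : rel V) (x : V) : {set V} :=
  [set z | (z == x) || missing arc x z || [exists w, missing arc x w && missing arc w z]].

Lemma ex1 (V : finType) (P Q : pred V) y :
  (forall w, P w = (w == y)) -> [exists w, P w && Q w] = Q y.
Proof.
move=> HP; apply/existsP/idP => [[w /andP[]]|]; first by rewrite HP => /eqP->.
by move=> Qy; exists y; rewrite HP eqxx.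
Qed.

Lemma ex2 (V : finType) (P Q : pred V) y1 y2 :
  (forall w, P w = (w == y1) || (w == y2)) -> [exists w, P w && Q w] = Q y1 || Q y2.
Proof.
move=> HP; apply/existsP/idP => [[w /andP[]]|]; first by rewrite HP => /orP[]/eqP-> ->; rewrite ?orbT.
by case/orP=> Qy; [exists y1|exists y2]; rewrite HP eqxx ?orbT.
Qed.

Lemma comp_path (V : finType) (arc : rel V) a b c x :
  missing_path arc a b c -> x \in [:: a; b; c] -> mcomp arc x = [set a; b; c].
Proof.
case=> nac hb ha hc.
have mA : forall z, missing arc a z = (z == b).
  by move=> z; move/setP: ha => /(_ z); rewrite !inE.
have mC : forall z, missing arc c z = (z == b).
  by move=> z; move/setP: hc => /(_ z); rewrite !inE.
have mB : forall z, missing arc b z = (z == a) || (z == c).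
  by move=> z; move/setP: hb => /(_ z); rewrite !inE.
rewrite !inE => /or3P[]/eqP-> ; apply/setP=> z; rewrite !inE.
- rewrite mA (ex1 _ mA) mB; by case: (z == a); case: (z == b); case: (z == c).
- rewrite mB (ex2 _ mB) mA mC.
  by case: (z == a); case: (z == b); case: (z == c).
- rewrite mC (ex1 _ mC) mB; by case: (z == a); case: (z == b); case: (z == c).
Qed.



Lemma chainF (V : finType) (arc : rel V) (P : nat -> seq V) (k : nat)
  (pp : nat -> nat) (X : nat -> V) (v : V) (s d : nat) :
  (forall m x y, x \in P m -> y \in P (m.+1 %% k) -> arc y x -> Dm arc x y) ->
  (forall m n x y, m != n -> x \in P m -> y \in P n -> arc x y || arc y x) ->
  (forall n, pp n.+1 = (pp n).+1 %% k) ->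
  (forall n, X n \in P (pp n)) -> v \in P (pp d) ->
  (forall n, s < n < d -> pp n != pp d) ->
  (forall n, s <= n < d -> arc (X n.+1) (X n)) ->
  arc (X s) v -> forall n, s <= n < d -> arc (X n) v.
Proof.
move=> HD Hadj pS HX Hv Hne Harc Hs.
move=> n; elim: n => [|n IH] hn.
  by have E : s = 0 by [lia]; rewrite E in Hs.
case: (eqVneq s n.+1) => [E|sn]; first by rewrite E in Hs.
have Xv : arc (X n) v by apply: IH; lia.
have A1 : arc (X n.+1) (X n) by apply: Harc; lia.
have hy : X n.+1 \in P ((pp n).+1 %% k) by rewrite -pS.
have D1 := HD (pp n) _ _ (HX n) hy A1.
have := Hadj (pp n.+1) (pp d) _ _ (Hne n.+1 ltac:(lia)) (HX n.+1) Hv.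
by case/orP => // H; case: (D1 v Xv H).
Qed.

Lemma chainB (V : finType) (arc : rel V) (P : nat -> seq V) (k : nat)
  (pp : nat -> nat) (Z : nat -> V) (v : V) (d K : nat) :
  (forall m x y, x \in P m -> y \in P (m.+1 %% k) -> arc y x -> Dm arc x y) ->
  (forall m n x y, m != n -> x \in P m -> y \in P n -> arc x y || arc y x) ->
  (forall n, pp n.+1 = (pp n).+1 %% k) ->
  (forall n, Z n \in P (pp n)) -> v \in P (pp d) ->
  (forall n, d < n < K -> pp n != pp d) ->
  (forall n, d <= n < K -> arc (Z n.+1) (Z n)) ->
  arc v (Z K) -> forall n, d < n <= K -> arc v (Z n).
Proof.
move=> HD Hadj pS HZ Hv Hne Harc HK.
suff H : forall m, m < K - d -> arc v (Z (K - m)).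
  by move=> n hn; have E : n = K - (K - n) by [lia]; rewrite E; apply: H; lia.
elim=> [|m IH] hm; first by rewrite subn0.
have E : K - m = (K - m.+1).+1 by lia.
have Zv : arc v (Z (K - m.+1).+1) by rewrite -E; apply: IH; lia.
have A1 : arc (Z (K - m.+1).+1) (Z (K - m.+1)) by apply: Harc; lia.
have hy : Z (K - m.+1).+1 \in P ((pp (K - m.+1)).+1 %% k) by rewrite -pS.
have D1 := HD _ _ _ (HZ _) hy A1.
have := Hadj (pp (K - m.+1)) (pp d) _ _ (Hne (K - m.+1) ltac:(lia)) (HZ _) Hv.
by case/orP => // H; case: (D1 v H Zv).
Qed.


Lemma pS k i n : (i + n.+1) %% k = ((i + n) %% k).+1 %% k.
Proof. by rewrite addnS -addn1 -[((_ %% k).+1)]addn1 modnDml. Qed.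

Lemma pk k i : i < k -> (i + k) %% k = i.
Proof. by move=> ik; rewrite modnDr modn_small. Qed.

Lemma pinj k i n1 n2 : i < k -> n1 < n2 -> n2 <= k -> n2 - n1 < k ->
  (i + n1) %% k != (i + n2) %% k.
Proof.
move=> ik h12 h2 hd; apply/negP => /eqP/eqP; rewrite eqn_modDl.
rewrite (@modn_small n1 k); last by lia.
case: (ltngtP n2 k) => [lt|gt|eq]; first by rewrite modn_small // => /eqP; lia.
  by lia.
by rewrite eq modnn => /eqP; lia.
Qed.

Lemma pd k i j : i < k -> j < k ->
  (i + (if i <= j then j - i else j + k - i)) %% k = j.
Proof.
move=> ik jk; case: ifP => h.
  by rewrite subnKC // modn_small.
by have -> : i + (j + k - i) = j + k by [lia]; rewrite modnDr modn_small.
Qed.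

Lemma pinjA i k n : i < k -> 1 < n < k -> (i + n) %% k != (i + k) %% k.
Proof. move=> ik hn; apply: pinj => //; lia. Qed.
Lemma pinjF i k n d : i < k -> 0 < n < d -> d < k -> (i + n) %% k != (i + d) %% k.
Proof. move=> ik hn dk; apply: pinj => //; lia. Qed.
Lemma pinjB i k n d : i < k -> d < n < k -> (i + n) %% k != (i + d) %% k.
Proof. move=> ik hn; rewrite eq_sym; apply: pinj => //; lia. Qed.
Lemma dbounds i j k : i < k -> j < k -> j != i ->
  0 < (if i <= j then j - i else j + k - i) < k.
Proof. move=> ik jk /eqP ji; case: ifP => h; lia. Qed.
Lemma predb k : 1 < k -> 1 <= k.-1 < k.
Proof. lia. Qed.
Lemma predd d : 0 < d -> 0 <= d.-1 < d.
Proof. lia. Qed.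

Lemma succ_neq k m : 1 < k -> m < k -> m != m.+1 %% k.
Proof.
move=> k2 mk; case: (ltngtP m.+1 k) => h; first by rewrite modn_small //; lia.
  lia.
by rewrite h modnn; lia.
Qed.


Fixpoint Epar (f : nat -> bool) (n : nat) : bool :=
  if n is n'.+1 then Epar f n' (+) f n' else false.

Definition rep (V : Type) (a b : nat -> V) (m : nat) (t : bool) : V :=
  if t then b m else a m.

Lemma main_contra (V : finType) (arc : rel V) k (a b c : nat -> V) i :
  oriented arc -> 1 < k -> i < k ->
  (forall m, m < k -> a m != b m) ->
  let Pk := fun m => if m < k then [:: a m; b m; c m] else [::] in
  let e := fun m => arc (b (m.+1 %% k)) (a m) in
  (forall m x y, x \in Pk m -> y \in Pk (m.+1 %% k) ->
     arc y x = ((y == b (m.+1 %% k)) == ((x == b m) (+) e m))) ->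
  (forall m x y, x \in Pk m -> y \in Pk (m.+1 %% k) -> arc y x -> Dm arc x y) ->
  (forall m n x y, m != n -> x \in Pk m -> y \in Pk n -> arc x y || arc y x) ->
  forall x0 z0 v j, j < k -> j != i -> x0 \in Pk i -> x0 != b i ->
    z0 \in Pk i -> z0 != b i -> v \in Pk j -> arc x0 v -> arc v z0 -> False.
Proof.
move=> Ho k2 ik Hab Pk e HTy HD Hadj.
pose p := fun n => (i + n) %% k.
have pS' : forall n, p n.+1 = (p n).+1 %% k by move=> n; exact: pS.
have pl : forall n, p n < k by move=> n; rewrite /p ltn_pmod // (ltnW k2).
have p0 : p 0 = i by rewrite /p addn0 modn_small.
have pK : p k = i by exact: pk.
pose E := Epar (fun l => e (p l)).
have ES : forall n, E n.+1 = E n (+) e (p n) by [].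
have repP : forall m t, m < k -> rep a b m t \in Pk m.
  by move=> m t mk; rewrite /Pk mk; case: t; rewrite /rep !inE eqxx ?orbT.
have repb : forall m t, m < k -> (rep a b m t == b m) = t.
  by move=> m [] mk; rewrite /rep ?eqxx ?(negbTE (Hab m mk)).
have HTy' : forall n x y, x \in Pk (p n) -> y \in Pk (p n.+1) ->
    arc y x = ((y == b (p n.+1)) == ((x == b (p n)) (+) e (p n))).
  by move=> n x y; rewrite pS'; apply: HTy.
have arcT : forall (Y : nat -> V) (T : nat -> bool) n,
    Y n \in Pk (p n) -> Y n.+1 \in Pk (p n.+1) ->
    (Y n == b (p n)) = T n -> (Y n.+1 == b (p n.+1)) = T n.+1 ->
    T n.+1 = T n (+) e (p n) -> arc (Y n.+1) (Y n).
  by move=> Y T n h1 h2 t1 t2 t3; rewrite (HTy' _ _ _ h1 h2) t1 t2 t3 eqxx.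
have PiI : forall x, x \in Pk i -> x \in Pk (p k) by move=> x; rewrite pK.
have aiP : a i \in Pk i by rewrite /Pk ik inE eqxx.
have PA : E k = true.
  case Ek: (E k) => //.
  pose X n := rep a b (p n) (E n).
  have HX : forall n, X n \in Pk (p n) by move=> n; apply: repP.
  have AX : forall n, arc (X n.+1) (X n).
    by move=> n; apply: (arcT X E) => //; rewrite /X repb.
  have X0 : X 0 = a i by rewrite /X p0.
  have Xk : X k = a i by rewrite /X Ek pK.
  have H : forall n, 1 <= n < k -> arc (X n) (a i).
    apply: (chainF HD Hadj pS' HX (PiI _ aiP)).
    - by move=> n hn; apply: pinjA.
    - by move=> n _; exact: AX.
    - by rewrite -X0; exact: AX.
  have := H k.-1 (predb k2).
  have := AX k.-1; rewrite prednK ?Xk; last by apply: ltnW.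
  by move=> h1 h2; case: (ori_contra Ho h1 h2).
move=> x0 z0 v j jk ji hx0 nx0 hz0 nz0 hv A1 A2.
pose d := if i <= j then j - i else j + k - i.
have pd' : p d = j by apply: pd.
have /andP[d0 dk] : 0 < d < k by apply: dbounds.
have vd : v \in Pk (p d) by rewrite pd'.
pose X n := if n is 0 then x0 else rep a b (p n) (E n).
have HX : forall n, X n \in Pk (p n) by case=> [|n]; [rewrite p0 | apply: repP].
have TX : forall n, (X n == b (p n)) = E n.
  by case=> [|n]; [rewrite p0 (negbTE nx0) | rewrite /X repb].
have AX : forall n, arc (X n.+1) (X n) by move=> n; apply: (arcT X E).
have F : arc (X d.-1) v.
  apply: (chainF (s := 0) HD Hadj pS' HX vd); last exact: predd.
  - by move=> n hn; apply: pinjF.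
  - by move=> n _; exact: AX.
  - exact: A1.
have hv' : v \in Pk (p d.-1.+1) by rewrite prednK.
have := HTy' _ _ _ (HX d.-1) hv'.
rewrite (negbTE (ori_neg Ho F)) TX prednK // -ES prednK // => vb.
pose Z n := if n == k then z0 else rep a b (p n) (~~ E n).
have HZ : forall n, Z n \in Pk (p n).
  by move=> n; rewrite /Z; case: eqP => [->|_]; [rewrite pK | apply: repP].
have TZ : forall n, n <= k -> (Z n == b (p n)) = ~~ E n.
  move=> n nk; rewrite /Z; have [->|nk'] := eqVneq n k.
    by rewrite PA pK (negbTE nz0).
  by rewrite ?(negbTE nk') repb.
have AZ : forall n, n < k -> arc (Z n.+1) (Z n).
  move=> n nk; apply: (arcT Z (fun n => ~~ E n)) => //.
  - by apply: TZ; apply: ltnW.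
  - by apply: TZ.
  - by rewrite ES; case: (E n); case: (e (p n)).
have G : arc v (Z d.+1).
  apply: (chainB HD Hadj pS' HZ vd); last by rewrite ltnSn; exact: dk.
  - by move=> n hn; apply: pinjB.
  - by move=> n /andP[_ hn]; apply: AZ.
  - by rewrite /Z eqxx.
have := HTy' _ _ _ vd (HZ d.+1).
rewrite (negbTE (ori_neg Ho G)) TZ // ES.
move: vb; case: (v == b (p d)); case: (E d); case: (e (p d)) => //.
Qed.


Lemma mp_facts (V : finType) (arc : rel V) a b c :
  missing_path arc a b c -> missing arc a b /\ missing arc b c.
Proof.
case=> _ hb ha _; split.
  by move/setP: ha => /(_ b); rewrite !inE eqxx.
by move/setP: hb => /(_ c); rewrite !inE eqxx orbT.
Qed.

Lemma miss_neq (V : finType) (arc : rel V) x y : missing arc x y -> x != y.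
Proof. by case/andP=> /andP[]. Qed.

Lemma miss_noarc (V : finType) (arc : rel V) x y : missing arc x y -> ~~ arc x y.
Proof. by case/andP=> /andP[]. Qed.

Lemma same_idx (V : finType) (arc : rel V) k a b c m n x :
  double_cycle arc k a b c -> m < k -> n < k ->
  x \in [:: a m; b m; c m] -> x \in [:: a n; b n; c n] -> m = n.
Proof.
case=> _ Hp Hinj _ mk nk hm hn; apply: Hinj => //.
by rewrite -(comp_path (Hp m mk) hm) -(comp_path (Hp n nk) hn).
Qed.

Lemma adj_idx (V : finType) (arc : rel V) k a b c m n x y :
  double_cycle arc k a b c -> m < k -> n < k -> m != n ->
  x \in [:: a m; b m; c m] -> y \in [:: a n; b n; c n] -> arc x y || arc y x.
Proof.
move=> DC mk nk mn hx hy.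
have xy : x != y.
  by apply/negP=> /eqP E; subst y; move/eqP: mn; apply; exact: (same_idx DC mk nk hx hy).
case: DC => [k2 Hp Hinj Hl].
have nm : ~~ missing arc x y.
  apply/negP=> M.
  have : y \in mcomp arc x by rewrite inE M orbT.
  rewrite (comp_path (Hp m mk) hx) => hy'.
  have hy2 : y \in [:: a m; b m; c m] by move: hy'; rewrite !inE orbA.
  by move/eqP: mn; apply; exact: (same_idx (And4 k2 Hp Hinj Hl) mk nk hy2 hy).
by move: nm; rewrite /missing xy /= negb_and !negbK.
Qed.

Unset Implicit Arguments.

Theorem lemma4p8 (V : finType) (arc : rel V) (k : nat) (a b c : nat -> V) :
  tourn_missing_P2 arc ->
  double_cycle arc k a b c ->
  forall i, i < k ->
    let H := KC k a b c in
    outN_in arc H (a i) :\ c i = outN_in arc H (c i) :\ a i /\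
    inN_in arc H (a i) :\ c i = inN_in arc H (c i) :\ a i.
Proof.
move=> [Ho _] DC i ik H.
have DC' := DC; case: DC' => k2 Hp Hinj Hl.
have k0 : 0 < k by apply: ltnW.
pose Pk := fun m => if m < k then [:: a m; b m; c m] else [::].
have PkE : forall m x, x \in Pk m -> m < k /\ x \in [:: a m; b m; c m].
  by move=> m x; rewrite /Pk; case: ifP => // _; rewrite in_nil.
have Hab : forall m, m < k -> a m != b m.
  by move=> m mk; apply: miss_neq; exact: (mp_facts (Hp m mk)).1.
have Hcb : forall m, m < k -> c m != b m.
  by move=> m mk; rewrite eq_sym; apply: miss_neq; exact: (mp_facts (Hp m mk)).2.
have Hadj : forall m n x y, m != n -> x \in Pk m -> y \in Pk n -> arc x y || arc y x.
  move=> m n x y mn /PkE[mk hx] /PkE[nk hy]; exact: (adj_idx DC mk nk mn hx hy).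
have Hloc : forall m x y, x \in Pk m -> y \in Pk (m.+1 %% k) ->
    (arc y x = ((y == b (m.+1 %% k)) == ((x == b m) (+) arc (b (m.+1 %% k)) (a m))))
    /\ (arc y x -> Dm arc x y).
  move=> m x y /PkE[mk hx] /PkE[_ hy].
  have m'k : m.+1 %% k < k by rewrite ltn_pmod.
  apply: (local_typed Ho (Hl m mk)) => //.
  - by move=> u w hu hw; exact: (adj_idx DC mk m'k (succ_neq k2 mk) hu hw).
  - exact: Hab.
  - exact: Hcb.
  - exact: Hab.
  - exact: Hcb.
have HTy := fun m x y hx hy => (Hloc m x y hx hy).1.
have HD := fun m x y hx hy => (Hloc m x y hx hy).2.
have mc := main_contra Ho k2 ik Hab HTy HD Hadj.
have aiP : a i \in Pk i by rewrite /Pk ik !inE eqxx.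
have ciP : c i \in Pk i by rewrite /Pk ik !inE eqxx !orbT.
have irr : forall x, arc x x = false by move=> x; apply/negbTE; exact: Ho.1.
have key : forall w, w \in H -> w != a i -> w != c i ->
    arc (a i) w = arc (c i) w /\ arc w (a i) = arc w (c i).
  move=> w; rewrite /H /KC inE => /existsP[j hj] wa wc.
  have wj : w \in [:: a j; b j; c j] by rewrite !inE orbA.
  have [ji|ji] := eqVneq (j : nat) i.
    move: wj; rewrite ji !inE (negbTE wa) (negbTE wc) orbF => /eqP ->.
    have [m1 m2] := mp_facts (Hp i ik).
    have h1 := miss_noarc m1; rewrite missingC in m1; have h2 := miss_noarc m1.
    have h3 := miss_noarc m2; rewrite missingC in m2; have h4 := miss_noarc m2.
    by rewrite (negbTE h1) (negbTE h2) (negbTE h3) (negbTE h4).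
  have wP : w \in Pk j by rewrite /Pk ltn_ord.
  have ija : arc (a i) w || arc w (a i) by apply: (Hadj i j) => //; rewrite eq_sym.
  have ijc : arc (c i) w || arc w (c i) by apply: (Hadj i j) => //; rewrite eq_sym.
  have c1 := mc (a i) (c i) w j (ltn_ord j) ji aiP (Hab i ik) ciP (Hcb i ik) wP.
  have c2 := mc (c i) (a i) w j (ltn_ord j) ji ciP (Hcb i ik) aiP (Hab i ik) wP.
  move: ija ijc c1 c2.
  case A1: (arc (a i) w); case A2: (arc w (a i)); case A3: (arc (c i) w);
    case A4: (arc w (c i)) => //= _ _ c1 c2;
    try (by case: c1); try (by case: c2);
    try (by case: (ori_contra Ho A1 A2)); try (by case: (ori_contra Ho A3 A4)).
have oE : forall v w, (w \in outN arc v) = arc v w by move=> v w; rewrite /outN in_set.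
have iE : forall v w, (w \in inN arc v) = arc w v by move=> v w; rewrite /inN in_set.
split; apply/setP => w; rewrite !in_setD1 !in_setI ?oE ?iE.
- have [->|wa] := eqVneq w (a i); first by rewrite irr !andbF.
  have [->|wc] := eqVneq w (c i); first by rewrite irr !andbF.
  case: (boolP (w \in H)) => hw //=.
  by rewrite (key w hw wa wc).1.
- have [->|wa] := eqVneq w (a i); first by rewrite irr !andbF.
  have [->|wc] := eqVneq w (c i); first by rewrite irr !andbF.
  case: (boolP (w \in H)) => hw //=.
  by rewrite (key w hw wa wc).2.
Qed.
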